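(* Let $x\in[0,1]\setminus\mathcal E$. Then for every $n\ge0$, $x\in I_n(x)$, where $I_n(x)$ is the open interval with endpoints $a_n(x)$ and $b_n(x)=a_n(x)+\varepsilon_n(x)\ell_n(x)$. Moreover, the sign of the slope of $T^n$ on $I_n(x)$ is $\varepsilon_n(x)$, $T^n(a_n(x))=0$, and $T^n$ maps $I_n(x)$ onto $(0,1)$.
   Context: $T:[0,1]\to[0,1]$ is $T(x)=3x$ on $[0,\frac13)$, $6x-2$ on $[\frac13,\frac12)$, $4-6x$ on $[\frac12,\frac23)$, $3x-2$ on $[\frac23,1]$. Let $U(x)=0,1,2,3$ and $\widetilde U(x)=0,\frac13,\frac23,\frac23$ on these four intervals respectively. For $x\in[0,1]$, $n\ge0$: $u_n(x)=U(T^nx)$, $\widetilde u_n(x)=\widetilde U(T^nx)$; $\beta_i(x,n)=\#\{k<n:u_k(x)=i\}$, $\beta_{i,j}(x,n)=\beta_i(x,n)+\beta_j(x,n)$; $\varepsilon_n(x)=(-1)^{\beta_2(x,n)}$, $\ell_n(x)=3^{-\beta_{0,3}(x,n)}6^{-\beta_{1,2}(x,n)}$, $a_0(x)=0$ and $a_n(x)=\sum_{k=0}^{n-1}\widetilde u_k(x)\varepsilon_k(x)\ell_k(x)$ for $n\ge1$. $\mathcal E$ is the set of $x\in[0,1]$ whose sequence $(u_n(x))_n$ is eventually constant equal to $0$ or eventually constant equal to $3$. The open interval with endpoints $a,b$ means the set of points strictly between $a$ and $b$ (even if $b<a$). *)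

(* Defs.v *)
From Stdlib Require Import Reals Lra Lia.
Open Scope R_scope.

(* The map T on [0,1] (formula extended to all of R; orbits of points of
   [0,1] stay in [0,1]). *)
Definition T (x : R) : R :=
  if Rlt_dec x (1/3) then 3 * x
  else if Rlt_dec x (1/2) then 6 * x - 2
  else if Rlt_dec x (2/3) then 4 - 6 * x
  else 3 * x - 2.

Definition U (x : R) : nat :=
  if Rlt_dec x (1/3) then 0%nat
  else if Rlt_dec x (1/2) then 1%nat
  else if Rlt_dec x (2/3) then 2%nat
  else 3%nat.

Definition Ut (x : R) : R :=
  if Rlt_dec x (1/3) then 0
  else if Rlt_dec x (1/2) then 1/3
  else if Rlt_dec x (2/3) then 2/3
  else 2/3.

Definition Tn (n : nat) (x : R) : R := Nat.iter n T x.

Definition u (n : nat) (x : R) : nat := U (Tn n x).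
Definition ut (n : nat) (x : R) : R := Ut (Tn n x).

Fixpoint beta (i : nat) (x : R) (n : nat) : nat :=
  match n with
  | O => O
  | S m => (beta i x m + (if Nat.eqb (u m x) i then 1 else 0))%nat
  end.

Definition beta2 (i j : nat) (x : R) (n : nat) : nat :=
  (beta i x n + beta j x n)%nat.

Definition eps (x : R) (n : nat) : R := (-1) ^ (beta 2 x n).

Definition ell (x : R) (n : nat) : R :=
  / (3 ^ (beta2 0 3 x n) * 6 ^ (beta2 1 2 x n)).

Fixpoint a (x : R) (n : nat) : R :=
  match n with
  | O => 0
  | S m => a x m + ut m x * eps x m * ell x m
  end.

Definition b (x : R) (n : nat) : R := a x n + eps x n * ell x n.

Definition inE (x : R) : Prop :=
  (exists N, forall n, (N <= n)%nat -> u n x = 0%nat) \/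
  (exists N, forall n, (N <= n)%nat -> u n x = 3%nat).

Definition open_between (p q y : R) : Prop := Rmin p q < y < Rmax p q.

(* Main.v *)
Require Import Defs.
From Stdlib Require Import Reals.
From Stdlib Require Import Lra Lia.
Open Scope R_scope.

Definition dd (x : R) (n : nat) : R := eps x n * ell x n.

Lemma Tn_S n y : Tn (S n) y = T (Tn n y).
Proof. reflexivity. Qed.

Lemma T0 : T 0 = 0.
Proof. unfold T; repeat destruct Rlt_dec; lra. Qed.
Lemma T1 : T 1 = 1.
Proof. unfold T; repeat destruct Rlt_dec; lra. Qed.
Lemma U0 : U 0 = 0%nat.
Proof. unfold U; repeat destruct Rlt_dec; first [reflexivity | exfalso; lra]. Qed.
Lemma U1 : U 1 = 3%nat.
Proof. unfold U; repeat destruct Rlt_dec; first [reflexivity | exfalso; lra]. Qed.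

Lemma fixpt x N c : T c = c -> Tn N x = c -> forall k, Tn (N + k) x = c.
Proof.
  intros Hc H k; induction k.
  - rewrite Nat.add_0_r; exact H.
  - rewrite Nat.add_succ_r, Tn_S, IHk; exact Hc.
Qed.

Lemma fix0 x N : Tn N x = 0 -> inE x.
Proof.
  intros H; left; exists N; intros m Hm.
  replace m with (N + (m - N))%nat by lia.
  unfold u; rewrite (fixpt x N 0 T0 H); apply U0.
Qed.

Lemma fix1 x N : Tn N x = 1 -> inE x.
Proof.
  intros H; right; exists N; intros m Hm.
  replace m with (N + (m - N))%nat by lia.
  unfold u; rewrite (fixpt x N 1 T1 H); apply U1.
Qed.

Lemma noexc x : ~ inE x -> forall n,
  Tn n x <> 0 /\ Tn n x <> 1/3 /\ Tn n x <> 1/2 /\ Tn n x <> 2/3 /\ Tn n x <> 1.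
Proof.
  intros HE n; repeat split; intro H.
  - apply HE; exact (fix0 x n H).
  - apply HE; apply (fix0 x (S n)); rewrite Tn_S, H; unfold T;
      repeat destruct Rlt_dec; lra.
  - apply HE; apply (fix1 x (S n)); rewrite Tn_S, H; unfold T;
      repeat destruct Rlt_dec; lra.
  - apply HE; apply (fix0 x (S n)); rewrite Tn_S, H; unfold T;
      repeat destruct Rlt_dec; lra.
  - apply HE; exact (fix1 x n H).
Qed.

Lemma eps_nz x n : eps x n <> 0.
Proof. unfold eps; apply pow_nonzero; lra. Qed.

Lemma ell_pos x n : 0 < ell x n.
Proof.
  unfold ell; apply Rinv_0_lt_compat; apply Rmult_lt_0_compat; apply pow_lt; lra.
Qed.

Lemma dd_nz x n : dd x n <> 0.
Proof.
  unfold dd; apply Rmult_integral_contrapositive; split;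
  [apply eps_nz | pose proof (ell_pos x n); lra].
Qed.

Lemma a_rec x n : a x (S n) = a x n + ut n x * dd x n.
Proof. unfold dd; simpl; ring. Qed.

Ltac drec Hu :=
  unfold dd, eps, ell, beta2; cbn [beta]; rewrite Hu; cbn [Nat.eqb];
  rewrite !pow_add, !pow_O, !pow_1;
  let b0 := fresh in let b1 := fresh in let b2 := fresh in let b3 := fresh in
  set (b0 := beta 0 _ _); set (b1 := beta 1 _ _);
  set (b2 := beta 2 _ _); set (b3 := beta 3 _ _);
  pose proof (pow_nonzero 3 b0 ltac:(lra));
  pose proof (pow_nonzero 3 b3 ltac:(lra));
  pose proof (pow_nonzero 6 b1 ltac:(lra));
  pose proof (pow_nonzero 6 b2 ltac:(lra));
  field; repeat split; assumption.

Lemma d_rec0 x n : u n x = 0%nat -> dd x (S n) = dd x n * (1/3).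
Proof. intro Hu; drec Hu. Qed.
Lemma d_rec1 x n : u n x = 1%nat -> dd x (S n) = dd x n * (1/6).
Proof. intro Hu; drec Hu. Qed.
Lemma d_rec2 x n : u n x = 2%nat -> dd x (S n) = dd x n * (-1/6).
Proof. intro Hu; drec Hu. Qed.
Lemma d_rec3 x n : u n x = 3%nat -> dd x (S n) = dd x n * (1/3).
Proof. intro Hu; drec Hu. Qed.

Definition Inv x n : Prop :=
  (forall w, 0 < w < 1 -> Tn n (a x n + dd x n * w) = w) /\
  Tn n (a x n) = 0 /\
  exists z, 0 < z < 1 /\ x = a x n + dd x n * z.

Lemma step x n ut0 f z0 :
  (forall w, 0 < w < 1 -> Tn n (a x n + dd x n * w) = w) ->
  Tn n (a x n) = 0 ->
  ut n x = ut0 -> dd x (S n) = dd x n * f ->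
  (forall w, 0 < w < 1 -> 0 < ut0 + f * w < 1 /\ T (ut0 + f * w) = w) ->
  (ut0 = 0 \/ (0 < ut0 < 1 /\ T ut0 = 0)) ->
  0 < z0 < 1 -> x = a x n + dd x n * (ut0 + f * z0) ->
  Inv x (S n).
Proof.
  intros IH IH0 Hut Hd Hf H0 Hz0 Hx.
  split; [|split].
  - intros w Hw. rewrite Tn_S, a_rec, Hut, Hd.
    replace (a x n + ut0 * dd x n + dd x n * f * w)
      with (a x n + dd x n * (ut0 + f * w)) by ring.
    destruct (Hf w Hw) as [H1 H2]. rewrite IH; auto.
  - rewrite Tn_S, a_rec, Hut. destruct H0 as [H0 | [H0 H0']].
    + rewrite H0. replace (a x n + 0 * dd x n) with (a x n) by ring.
      rewrite IH0; apply T0.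
    + replace (a x n + ut0 * dd x n) with (a x n + dd x n * ut0) by ring.
      rewrite IH; auto.
  - exists z0; split; auto. rewrite a_rec, Hut, Hd.
    transitivity (a x n + dd x n * (ut0 + f * z0)); [exact Hx | ring].
Qed.

Lemma inv_all x : 0 <= x <= 1 -> ~ inE x -> forall n, Inv x n.
Proof.
  intros Hx HE n. pose proof (noexc x HE) as NE.
  induction n.
  - assert (Hd : dd x 0 = 1).
    { unfold dd, eps, ell, beta2; cbn [beta Nat.add]; rewrite !pow_O; field. }
    split; [|split].
    + intros w Hw; simpl a; rewrite Hd; simpl; ring.
    + reflexivity.
    + exists x; destruct (NE 0%nat) as [N0 [_ [_ [_ N1]]]]; simpl in N0, N1.
      split; [lra|]. simpl a; rewrite Hd; ring.
  - destruct IHn as [IH [IH0 [z0 [Hz0 Hxz]]]].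
    pose proof (IH z0 Hz0) as Hz. rewrite <- Hxz in Hz.
    destruct (NE n) as [_ [N3 [N2 [N23 _]]]]. rewrite Hz in N3, N2, N23.
    assert (Hu : u n x = U z0) by (unfold u; rewrite Hz; reflexivity).
    assert (Hut : ut n x = Ut z0) by (unfold ut; rewrite Hz; reflexivity).
    destruct (Rlt_dec z0 (1/3)).
    + assert (H : u n x = 0%nat) by (rewrite Hu; unfold U; destruct Rlt_dec; [reflexivity|lra]).
      apply (step x n 0 (1/3) (3 * z0)); auto.
      * rewrite Hut; unfold Ut; destruct Rlt_dec; [reflexivity|lra].
      * apply d_rec0; auto.
      * intros w Hw; split; [lra|]; unfold T; repeat destruct Rlt_dec; lra.
      * lra.
      * replace (0 + 1/3 * (3 * z0)) with z0 by field; exact Hxz.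
    + destruct (Rlt_dec z0 (1/2)).
      * assert (H : u n x = 1%nat) by (rewrite Hu; unfold U; repeat destruct Rlt_dec; first [reflexivity|lra]).
        apply (step x n (1/3) (1/6) (6 * z0 - 2)); auto.
        -- rewrite Hut; unfold Ut; repeat destruct Rlt_dec; first [reflexivity|lra].
        -- apply d_rec1; auto.
        -- intros w Hw; split; [lra|]; unfold T; repeat destruct Rlt_dec; lra.
        -- right; split; [lra|]; unfold T; repeat destruct Rlt_dec; lra.
        -- lra.
        -- replace (1/3 + 1/6 * (6 * z0 - 2)) with z0 by field; exact Hxz.
      * destruct (Rlt_dec z0 (2/3)).
        -- assert (H : u n x = 2%nat) by (rewrite Hu; unfold U; repeat destruct Rlt_dec; first [reflexivity|lra]).
           apply (step x n (2/3) (-1/6) (4 - 6 * z0)); auto.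
           ++ rewrite Hut; unfold Ut; repeat destruct Rlt_dec; first [reflexivity|lra].
           ++ apply d_rec2; auto.
           ++ intros w Hw; split; [lra|]; unfold T; repeat destruct Rlt_dec; lra.
           ++ right; split; [lra|]; unfold T; repeat destruct Rlt_dec; lra.
           ++ lra.
           ++ replace (2/3 + -1/6 * (4 - 6 * z0)) with z0 by field; exact Hxz.
        -- assert (H : u n x = 3%nat) by (rewrite Hu; unfold U; repeat destruct Rlt_dec; first [reflexivity|lra]).
           apply (step x n (2/3) (1/3) (3 * z0 - 2)); auto.
           ++ rewrite Hut; unfold Ut; repeat destruct Rlt_dec; first [reflexivity|lra].
           ++ apply d_rec3; auto.
           ++ intros w Hw; split; [lra|]; unfold T; repeat destruct Rlt_dec; lra.
           ++ right; split; [lra|]; unfold T; repeat destruct Rlt_dec; lra.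
           ++ lra.
           ++ replace (2/3 + 1/3 * (3 * z0 - 2)) with z0 by field; exact Hxz.
Qed.

Lemma ob_iff p d y : d <> 0 ->
  (open_between p (p + d) y <-> exists w, 0 < w < 1 /\ y = p + d * w).
Proof.
  intros Hd; unfold open_between, Rmin, Rmax; split.
  - intros H. exists ((y - p) / d). split.
    + destruct (Rle_dec p (p + d)).
      * assert (0 < d) by lra. split.
        -- apply Rdiv_lt_0_compat; lra.
        -- apply (Rmult_lt_reg_r d); [lra|].
           replace ((y - p) / d * d) with (y - p) by (field; auto); lra.
      * assert (d < 0) by lra. split.
        -- apply (Rmult_lt_reg_r (-d)); [lra|].
           replace ((y - p) / d * - d) with (p - y) by (field; auto); lra.
        -- apply (Rmult_lt_reg_r (-d)); [lra|].
           replace ((y - p) / d * - d) with (p - y) by (field; auto); lra.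
    + field; auto.
  - intros [w [Hw Hy]]. subst y.
    destruct (Rle_dec p (p + d)).
    + assert (0 < d) by lra. split; nra.
    + assert (d < 0) by lra. split; nra.
Qed.

Theorem proposition2p3 (x : R) :
  0 <= x <= 1 -> ~ inE x ->
  forall n : nat,
    open_between (a x n) (b x n) x /\
    (exists s c : R, 0 < eps x n * s /\
       forall y, open_between (a x n) (b x n) y -> Tn n y = s * y + c) /\
    Tn n (a x n) = 0 /\
    (forall y, open_between (a x n) (b x n) y -> 0 < Tn n y < 1) /\
    (forall z, 0 < z < 1 -> exists y, open_between (a x n) (b x n) y /\ Tn n y = z).
Proof.
  intros Hx HE n.
  destruct (inv_all x Hx HE n) as [IH [IH0 [z0 [Hz0 Hxz]]]].
  assert (Hb : b x n = a x n + dd x n) by reflexivity.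
  rewrite Hb. pose proof (dd_nz x n) as Hd.
  pose proof (eps_nz x n) as He. pose proof (ell_pos x n) as Hl.
  split; [|split; [|split; [|split]]].
  - apply ob_iff; auto. exists z0; auto.
  - exists (/ dd x n), (- a x n / dd x n). split.
    + unfold dd. replace (eps x n * / (eps x n * ell x n)) with (/ ell x n)
        by (field; split; lra).
      apply Rinv_0_lt_compat; auto.
    + intros y Hy. apply ob_iff in Hy; auto. destruct Hy as [w [Hw Hy]].
      subst y. rewrite IH; auto. field; auto.
  - exact IH0.
  - intros y Hy. apply ob_iff in Hy; auto. destruct Hy as [w [Hw Hy]].
    subst y. rewrite IH; auto.
  - intros z Hz. exists (a x n + dd x n * z). split.
    + apply ob_iff; auto. exists z; auto.
    + apply IH; auto.
Qed.
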